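(* Let $k$ be a field and $Y,Z\in\mathcal S_{\alpha,\gamma}^\beta(k)$. Then $Y\leq_{\rm ext}Z$ holds if and only if there exist finite-dimensional $\Lambda$-modules $M_i,U_i,V_i$ ($1\le i\le s$) and $M_{s+1}$, and short exact sequences $0\to U_i\to M_i\to V_i\to 0$ of $\Lambda$-modules, such that $Y\cong M_1$, $U_i\oplus V_i\cong M_{i+1}$ for $1\le i\le s$, and $Z\cong M_{s+1}$, for some natural number $s$.
   Context: $\Lambda=\begin{pmatrix}k[T]&k[T]\\0&k[T]\end{pmatrix}$; finite-dimensional right $\Lambda$-modules are identified with triples $(X_1,X_2,h)$ of finite-dimensional $k[T]$-modules and a $k[T]$-homomorphism $h:X_1\to X_2$, morphisms being pairs $(\psi_1,\psi_2)$ of $k[T]$-maps with $h'\psi_1=\psi_2h$. For a partition $\alpha$ let $N_\alpha=\bigoplus_ik[T]/(T^{\alpha_i})$. $\mathcal S(k)$ is the full subcategory of $\Lambda$-modules $(N_\alpha,N_\beta,f)$ with $\alpha,\beta$ partitions and $f$ injective; $\mathcal S_{\alpha,\gamma}^\beta(k)$ consists of those with the given $\alpha,\beta$ and $\operatorname{Coker}f\cong N_\gamma$. $Y\leq_{\rm ext}Z$ means: there exist objects $M_i,U_i,V_i$ in $\mathcal S(k)$ and short exact sequences $0\to U_i\to M_i\to V_i\to0$ in $\mathcal S(k)$ (i.e. of $\Lambda$-modules with all terms in $\mathcal S(k)$) with $Y\cong M_1$, $U_i\oplus V_i\cong M_{i+1}$ for $1\le i\le s$, and $Z\cong M_{s+1}$,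 for some $s$. *)

(* Defs.v *)
(* Finite-dimensional k[T]-modules are modelled as pairs
   (n, A) with A : 'M[k]_n the action of T (row-vector convention: x |-> x *m A). *)
From mathcomp Require Import all_boot all_order all_algebra.
Set Implicit Arguments. Unset Strict Implicit. Unset Printing Implicit Defensive.
Import GRing.Theory.
Local Open Scope ring_scope.

(* A (finite-dimensional) triple (X1, X2, h): carriers k^d1, k^d2, T-actions T1, T2,
   and h : X1 -> X2 (x |-> x *m hm). *)
Record lmod (k : fieldType) := LMod {
  d1 : nat; d2 : nat;
  T1 : 'M[k]_d1; T2 : 'M[k]_d2;
  hm : 'M[k]_(d1, d2) }.
Arguments LMod {k d1 d2}.

(* h is k[T]-linear, so the triple is a Lambda-module *)
Definition is_lmod (k : fieldType) (X : lmod k) : Prop :=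
  T1 X *m hm X = hm X *m T2 X.

Definition is_hom (k : fieldType) (X Y : lmod k)
    (p1 : 'M[k]_(d1 X, d1 Y)) (p2 : 'M[k]_(d2 X, d2 Y)) : Prop :=
  [/\ T1 X *m p1 = p1 *m T1 Y, T2 X *m p2 = p2 *m T2 Y & hm X *m p2 = p1 *m hm Y].

Arguments is_hom {k} X Y p1 p2.

Definition iso (k : fieldType) (X Y : lmod k) : Prop :=
  exists p1 p2 q1 q2, [/\ is_hom X Y p1 p2, is_hom Y X q1 q2,
    p1 *m q1 = 1%:M /\ q1 *m p1 = 1%:M & p2 *m q2 = 1%:M /\ q2 *m p2 = 1%:M].

(* short exact sequence 0 -> U -> M -> V -> 0 of Lambda-modules
   (exactness of triples is componentwise) *)
Definition ses (k : fieldType) (U M V : lmod k) : Prop :=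
  exists f1 f2 g1 g2, [/\ is_hom U M f1 f2, is_hom M V g1 g2,
    row_free f1 /\ row_free f2, row_full g1 /\ row_full g2 &
    (f1 == kermx g1)%MS /\ (f2 == kermx g2)%MS].

Definition dsum (k : fieldType) (U V : lmod k) : lmod k :=
  LMod (block_mx (T1 U) 0 0 (T1 V)) (block_mx (T2 U) 0 0 (T2 V))
       (block_mx (hm U) 0 0 (hm V)).

Definition is_partition (a : seq nat) : bool := sorted geq a && all (fun x => 0 < x)%N a.

(* k[T]/(T^n): action of T on the basis 1, T, ..., T^(n-1) *)
Definition Jblk (k : fieldType) (n : nat) : 'M[k]_n :=
  \matrix_(i < n, j < n) ((i.+1 == j :> nat)%:R).

(* N_a = (+)_i k[T]/(T^(a_i)) *)
Fixpoint Nmat (k : fieldType) (a : seq nat) : 'M[k]_(sumn a) :=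
  match a return 'M[k]_(sumn a) with
  | [::] => 0
  | x :: r => block_mx (Jblk k x) 0 0 (Nmat k r)
  end.

Definition inS (k : fieldType) (X : lmod k) : Prop :=
  exists (a b : seq nat) (f : 'M[k]_(sumn a, sumn b)),
    [/\ is_partition a, is_partition b, X = LMod (Nmat k a) (Nmat k b) f,
        is_lmod X & row_free f].

(* X is an object of S^b_{a,c}(k): additionally Coker f ~= N_c, i.e. there is
   an exact sequence N_a --f--> N_b --g--> N_c -> 0 of k[T]-modules *)
Definition inSabc (k : fieldType) (a b c : seq nat) (X : lmod k) : Prop :=
  exists f : 'M[k]_(sumn a, sumn b),
    [/\ X = LMod (Nmat k a) (Nmat k b) f, is_lmod X, row_free f &
        exists g : 'M[k]_(sumn b, sumn c),
          [/\ Nmat k b *m g = g *m Nmat k c, row_full g & (f == kermx g)%MS]].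

(* chain of degenerations Y = M_1 ~> ... ~> M_(s+1) = Z with all M_i, U_i, V_i in P
   (indices shifted to start at 0) *)
Definition ext_chain (k : fieldType) (P : lmod k -> Prop) (Y Z : lmod k) : Prop :=
  exists (s : nat) (M U V : nat -> lmod k),
    [/\ (forall i, (i <= s)%N -> P (M i)),
        (forall i, (i < s)%N -> P (U i) /\ P (V i)),
        iso Y (M 0%N),
        (forall i, (i < s)%N -> ses (U i) (M i) (V i) /\ iso (dsum (U i) (V i)) (M i.+1)) &
        iso (M s) Z].

Definition le_ext (k : fieldType) (Y Z : lmod k) : Prop := ext_chain (@inS k) Y Z.

(* Main.v *)
Require Import Defs.
From mathcomp Require Import all_boot all_order all_algebra.
From mathcomp Require Import zify.
From Stdlib Require Import IndefiniteDescription.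
Set Implicit Arguments. Unset Strict Implicit. Unset Printing Implicit Defensive.
Import GRing.Theory.
Local Open Scope ring_scope.


Definition chainmx (k : fieldType) n (A : 'M[k]_n) (l : nat) (v : 'rV[k]_n) : 'M[k]_(l, n) :=
  \matrix_(i < l) (v *m A ^+ i).

Fixpoint chmx (k : fieldType) n (A : 'M[k]_n) (cs : seq (nat * 'rV[k]_n)) :
   'M[k]_(sumn (unzip1 cs), n) :=
  match cs return 'M[k]_(sumn (unzip1 cs), n) with
  | [::] => 0
  | c :: r => col_mx (chainmx A c.1 c.2) (chmx A r)
  end.

Fixpoint tlmx (k : fieldType) n (A : 'M[k]_n) (cs : seq (nat * 'rV[k]_n)) :
   'M[k]_(size cs, n) :=
  match cs return 'M[k]_(size cs, n) with
  | [::] => 0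
  | c :: r => col_mx (c.2 *m A ^+ c.1.-1) (tlmx A r)
  end.

Lemma sub_colL (k : fieldType) m1 m2 n (X : 'M[k]_(m1, n)) (Y : 'M[k]_(m2, n)) :
  (X <= col_mx X Y)%MS.
Proof. by rewrite -addsmxE addsmxSl. Qed.

Lemma sub_colR (k : fieldType) m1 m2 n (X : 'M[k]_(m1, n)) (Y : 'M[k]_(m2, n)) :
  (Y <= col_mx X Y)%MS.
Proof. by rewrite -addsmxE addsmxSr. Qed.

Lemma chmx_sub (k : fieldType) n (A : 'M[k]_n) cs p (X : 'M[k]_(p, n)) :
  (forall c, c \in cs -> (chainmx A c.1 c.2 <= X)%MS) -> (chmx A cs <= X)%MS.
Proof.
elim: cs => [|c r IH] H /=; first by rewrite sub0mx.
rewrite col_mx_sub H ?mem_head //= IH // => d Hd; apply: H; by rewrite inE Hd orbT.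
Qed.

Lemma chain_sub (k : fieldType) n (A : 'M[k]_n) cs c :
  c \in cs -> (chainmx A c.1 c.2 <= chmx A cs)%MS.
Proof.
elim: cs => [|d r IH] //=; rewrite inE => /orP[/eqP->|H]; first exact: sub_colL.
exact: submx_trans (IH H) (sub_colR _ _).
Qed.

Lemma tlmx_sub (k : fieldType) n (A : 'M[k]_n) cs p (X : 'M[k]_(p, n)) :
  (forall c, c \in cs -> (c.2 *m A ^+ c.1.-1 <= X)%MS) -> (tlmx A cs <= X)%MS.
Proof.
elim: cs => [|c r IH] H /=; first by rewrite sub0mx.
change (col_mx (c.2 *m A ^+ c.1.-1) (tlmx A r) <= X)%MS.
rewrite col_mx_sub H ?mem_head //= IH // => d Hd; apply: H; by rewrite inE Hd orbT.
Qed.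

Lemma tl_sub (k : fieldType) n (A : 'M[k]_n) cs c :
  c \in cs -> (c.2 *m A ^+ c.1.-1 <= tlmx A cs)%MS.
Proof.
elim: cs => [|d r IH] //; rewrite inE => /orP[/eqP->|H].
  exact: (sub_colL (d.2 *m A ^+ d.1.-1) (tlmx A r)).
exact: submx_trans (IH H) (sub_colR (d.2 *m A ^+ d.1.-1) (tlmx A r)).
Qed.

Lemma chainmx_sub (k : fieldType) n (A : 'M[k]_n) l v p (X : 'M[k]_(p, n)) :
  (forall i, (i < l)%N -> (v *m A ^+ i <= X)%MS) -> (chainmx A l v <= X)%MS.
Proof. by move=> H; apply/row_subP => i; rewrite rowK H. Qed.

Lemma vec_chain (k : fieldType) n (A : 'M[k]_n) l v i :
  (i < l)%N -> (v *m A ^+ i <= chainmx A l v)%MS.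
Proof.
move=> Hi; have -> : v *m A ^+ i = row (Ordinal Hi) (chainmx A l v) by rewrite rowK.
exact: row_sub.
Qed.

Lemma Jblk_chain (k : fieldType) n (A : 'M[k]_n) l v :
  v *m A ^+ l = 0 -> Jblk k l *m chainmx A l v = chainmx A l v *m A.
Proof.
move=> Hv; apply/row_matrixP => i; rewrite !row_mul rowK.
have -> : v *m A ^+ i *m A = v *m A ^+ i.+1 by rewrite exprSr mulmxA.
rewrite mulmx_sum_row.
case: (ltnP i.+1 l) => Hil.
  rewrite (bigD1 (Ordinal Hil)) //= big1 ?addr0.
    by rewrite /Jblk !mxE eqxx scale1r rowK.
  move=> j Hj; rewrite /Jblk !mxE; case: eqP => E; last by rewrite scale0r.
  by case/eqP: Hj; apply: val_inj; rewrite /= E.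
have E : i.+1 = l by apply/eqP; rewrite eqn_leq Hil ltn_ord.
rewrite E Hv big1 // => j _; rewrite /Jblk !mxE E; case: eqP => Ej; last by rewrite scale0r.
by move: (ltn_ord j); rewrite -Ej ltnn.
Qed.

Lemma Nmat_chmx (k : fieldType) n (A : 'M[k]_n) cs :
  all (fun c => c.2 *m A ^+ c.1 == 0) cs ->
  Nmat k (unzip1 cs) *m chmx A cs = chmx A cs *m A.
Proof.
elim: cs => [|c r IH] /=; first by rewrite !mul0mx.
case/andP => /eqP Hc Hr.
by rewrite mul_block_col !mul0mx addr0 add0r Jblk_chain // IH // mul_col_mx.
Qed.

Lemma mxexpSr (k : fieldType) n (A : 'M[k]_n) i : A ^+ i.+1 = A ^+ i *m A.
Proof. by rewrite exprSr. Qed.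

Lemma mxexpS (k : fieldType) n (A : 'M[k]_n) i : A ^+ i.+1 = A *m A ^+ i.
Proof. by rewrite exprS. Qed.

Lemma pow_sub (k : fieldType) n (A : 'M[k]_n) p (S : 'M[k]_(p, n)) q (v : 'M[k]_(q, n)) i :
  (S *m A <= S)%MS -> (v <= S)%MS -> (v *m A ^+ i <= S)%MS.
Proof.
move=> HS Hv; elim: i => [|i IH]; first by rewrite expr0 mulmx1.
by rewrite exprSr mulmxA; apply: submx_trans (submxMr A IH) HS.
Qed.

Lemma rank_drop (k : fieldType) n (A : 'M[k]_n) m p (S : 'M[k]_(p, n)) :
  A ^+ m = 0 -> (S *m A <= S)%MS -> (0 < \rank S)%N -> (\rank (S *m A) < \rank S)%N.
Proof.
move=> Hm HS Hr; rewrite ltnNge; apply/negP => Hle.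
have E : (S *m A == S)%MS by rewrite -(mxrank_leqif_eq HS) eqn_leq Hle (mxrankS HS).
case/andP: E => _ E2.
have Hj : forall j, (S <= S *m A ^+ j)%MS.
  elim=> [|j IH]; first by rewrite expr0 mulmx1.
  rewrite exprSr mulmxA; exact: submx_trans E2 (submxMr _ IH).
move: (mxrankS (Hj m)); rewrite Hm mulmx0 mxrank0 leqn0 => /eqP S0.
by move: Hr; rewrite S0.
Qed.

Lemma sorted_geq_cat (s1 s2 : seq nat) :
  sorted geq s1 -> sorted geq s2 -> (forall x y, x \in s1 -> y \in s2 -> (y <= x)%N) ->
  sorted geq (s1 ++ s2).
Proof.
case: s1 => [|x s1] //= H1 H2 H; rewrite cat_path H1 /=.
case: s2 H2 H => [|y s2] //= H2 H; rewrite H2 andbT; apply: H; last exact: mem_head.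
exact: mem_last.
Qed.

Lemma sumn_const1 (T : Type) (s : seq T) : sumn (map (fun _ => 1%N) s) = size s.
Proof. by elim: s => //= x s ->. Qed.

Lemma sumn_unzip1_cat (T : Type) (s1 s2 : seq (nat * T)) :
  sumn (unzip1 (s1 ++ s2)) = (sumn (unzip1 s1) + sumn (unzip1 s2))%N.
Proof. by rewrite /unzip1 map_cat sumn_cat. Qed.

Lemma sumn_lift (T T' : Type) (f : nat * T -> T') (s : seq (nat * T)) :
  sumn (unzip1 [seq (c.1.+1, f c) | c <- s]) = (sumn (unzip1 s) + size s)%N.
Proof. by elim: s => //= c s ->; rewrite addSn addnS addnA. Qed.

Lemma sumn_ones (T T' : Type) (g : T -> T') (s : seq T) :
  sumn (unzip1 [seq (1%N, g i) | i <- s]) = size s.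
Proof. by elim: s => //= c s ->. Qed.

Lemma unzip1_cat (T : Type) (s1 s2 : seq (nat * T)) :
  unzip1 (s1 ++ s2) = unzip1 s1 ++ unzip1 s2.
Proof. by rewrite /unzip1 map_cat. Qed.

Lemma unzip1_lift (T T' : Type) (f : nat * T -> T') (s : seq (nat * T)) :
  unzip1 [seq (c.1.+1, f c) | c <- s] = map S (unzip1 s).
Proof. by elim: s => //= c s ->. Qed.

Lemma unzip1_ones (T T' : Type) (g : T -> T') (s : seq T) :
  unzip1 [seq (1%N, g i) | i <- s] = nseq (size s) 1%N.
Proof. by elim: s => //= c s ->. Qed.

Definition jgood (k : fieldType) n (A : 'M[k]_n) p (S : 'M[k]_(p, n)) cs :=
  [/\ (chmx A cs == S)%MS, row_free (chmx A cs), row_free (tlmx A cs),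
      all (fun c => 0 < c.1)%N cs &
      sorted geq (unzip1 cs) && all (fun c => c.2 *m A ^+ c.1 == 0) cs].

Lemma jordan_sub (k : fieldType) n (A : 'M[k]_n) m : A ^+ m = 0 ->
  forall r p (S : 'M[k]_(p, n)), (\rank S <= r)%N -> (S *m A <= S)%MS ->
  exists cs, jgood A S cs.
Proof.
move=> Hm; elim=> [|r IH] p S Hr HS.
  have S0 : S = 0 by apply/eqP; rewrite -mxrank_eq0 -leqn0.
  exists [::]; split => //=; rewrite ?S0 /row_free ?mxrank0 //.
  by apply/andP; split; rewrite sub0mx.
have [S0|Spos] := eqVneq (\rank S) 0%N.
  have S00 : S = 0 by apply/eqP; rewrite -mxrank_eq0 S0.
  exists [::]; split => //=; rewrite ?S00 /row_free ?mxrank0 //.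
  by apply/andP; split; rewrite sub0mx.
have Hlt : (\rank (S *m A) < \rank S)%N by apply: rank_drop Hm HS _; rewrite lt0n.
set S' := S *m A.
have HS' : (S' *m A <= S')%MS by exact: submxMr.
have [cs [Ecs Fcs Ftl Pcs /andP[Scs Vcs]]] := IH _ S' (leq_trans (leq_trans Hlt Hr) (leqnn _)) HS'.
have {IH} _ := IH.
case/andP: Ecs => Ecs1 Ecs2.
have S'S : (S' <= S)%MS := HS.
set L := fun w : 'rV[k]_n => w *m pinvmx S' *m S.
have LS : forall w, (L w <= S)%MS by move=> w; exact: submxMl.
have c2S' : forall c, c \in cs -> (c.2 <= S')%MS.
  move=> c Hc; have Hpos := allP Pcs c Hc.
  have := vec_chain A c.2 Hpos; rewrite expr0 mulmx1 => H.
  exact: submx_trans (submx_trans H (chain_sub A Hc)) Ecs1.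
have LA : forall w, (w <= S')%MS -> L w *m A = w.
  by move=> w Hw; rewrite /L -mulmxA mulmxKpV.
set cs1 := [seq (c.1.+1, L c.2) | c <- cs].
set K := (S :&: kermx A)%MS.
set Tm := tlmx A cs.
set U := row_base (K :\: Tm)%MS.
set us := [seq (1%N, row i U) | i <- enum 'I_(\rank (K :\: Tm)%MS)].
set cs' := cs1 ++ us.
have UK : (U <= K)%MS by rewrite eq_row_base diffmxSl.
have KS : (K <= S)%MS by exact: capmxSl.
have KA : (K <= kermx A)%MS by exact: capmxSr.
have cs1P : forall c, c \in cs -> (c.1.+1, L c.2) \in cs'.
  by move=> c Hc; rewrite mem_cat (map_f (fun c => (c.1.+1, L c.2)) Hc).
have usP : forall i, (1%N, row i U) \in cs'.
  by move=> i; rewrite mem_cat (map_f (fun i => (1%N, row i U)) (mem_enum _ i)) orbT.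
have tlL : forall c, c \in cs -> c.2 *m A ^+ c.1.-1 = L c.2 *m A ^+ c.1.
  move=> c Hc; have Hpos := allP Pcs c Hc.
  by rewrite -(prednK Hpos) mxexpS mulmxA LA ?c2S' //.
have TmK : (Tm <= K)%MS.
  apply: tlmx_sub => c Hc; rewrite sub_capmx; apply/andP; split.
    exact: pow_sub HS (submx_trans (c2S' c Hc) S'S).
  apply/sub_kermxP; rewrite -mulmxA -mxexpSr prednK ?(allP Pcs c Hc) //.
  exact/eqP/(allP Vcs c Hc).
set Ev := chmx A [seq (c.1, L c.2) | c <- cs].
have EvS : (Ev <= S)%MS.
  apply: chmx_sub => c /mapP[d Hd ->]; apply: chainmx_sub => i _.
  exact: pow_sub HS (LS _).
have EvA : (chmx A cs <= Ev *m A)%MS.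
  apply: chmx_sub => c Hc; apply: chainmx_sub => i Hi.
  have -> : c.2 *m A ^+ i = (L c.2 *m A ^+ i) *m A.
    by rewrite -mulmxA -mxexpSr mxexpS mulmxA LA ?c2S'.
  apply: submxMr; apply: submx_trans (vec_chain _ _ Hi) _.
  exact: (chain_sub A (map_f (fun c => (c.1, L c.2)) Hc)).
have Evcs' : (Ev <= chmx A cs')%MS.
  apply: chmx_sub => c /mapP[d Hd ->]; apply: chainmx_sub => i Hi.
  apply: submx_trans (vec_chain A (L d.2) (leqW Hi)) _.
  by have H := chain_sub A (cs1P d Hd); simpl in H.
have Tmcs' : (Tm <= chmx A cs')%MS.
  apply: tlmx_sub => c Hc; rewrite tlL //.
  apply: submx_trans (vec_chain A (L c.2) (ltnSn c.1)) _.
  by have H := chain_sub A (cs1P c Hc); simpl in H.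
have Ucs' : (U <= chmx A cs')%MS.
  apply/row_subP => i; apply: submx_trans (chain_sub A (usP i)).
  by have := vec_chain A (row i U) (ltn0Sn 0); rewrite expr0 mulmx1.
have Kcs' : (K <= chmx A cs')%MS.
  rewrite -(addsmx_diff_cap_eq K Tm) addsmx_sub; apply/andP; split.
    by rewrite -(eq_row_base (K :\: Tm)%MS).
  exact: submx_trans (capmxSr _ _) Tmcs'.
have Scs' : (S <= chmx A cs')%MS.
  have : (S *m A <= Ev *m A)%MS := submx_trans Ecs2 EvA.
  case/submxP => D HD.
  have -> : S = (S - D *m Ev) + D *m Ev by rewrite subrK.
  apply: addmx_sub; last exact: submx_trans (submxMl _ _) Evcs'.
  apply: submx_trans Kcs'; rewrite sub_capmx; apply/andP; split.
    by apply: addmx_sub; rewrite ?submx_refl // eqmx_opp; apply: submx_trans (submxMl _ _) EvS.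
  by apply/sub_kermxP; rewrite mulmxBl -mulmxA -HD subrr.
have cs'S : (chmx A cs' <= S)%MS.
  apply: chmx_sub => c; rewrite mem_cat => /orP[/mapP[d Hd ->]|/mapP[i _ ->]];
    apply: chainmx_sub => j _; apply: pow_sub HS _.
    exact: LS.
  by apply: submx_trans (row_sub i U) (submx_trans UK KS).
have sum1 : sumn (unzip1 cs') = (sumn (unzip1 cs) + size cs + \rank (K :\: Tm)%MS)%N.
  by rewrite sumn_unzip1_cat sumn_lift sumn_ones size_enum_ord.
have rkK : (\rank (K :\: Tm)%MS + size cs <= \rank K)%N.
  rewrite -{2}(eqP Ftl) -mxrank_disjoint_sum ?capmx_diff //.
  by apply: mxrankS; rewrite addsmx_sub diffmxSl TmK.
have rkS : (\rank S = sumn (unzip1 cs) + \rank K)%N.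
  by rewrite -(mxrank_mul_ker S A) -/S' -(eqP Fcs); congr (_ + _)%N; apply/eqmx_rank/andP.
have Fcs' : row_free (chmx A cs').
  rewrite /row_free eqn_leq rank_leq_row /=.
  apply: leq_trans _ (mxrankS Scs'); rewrite sum1 rkS -addnA leq_add2l addnC //.
have Ftl' : row_free (tlmx A cs').
  rewrite /row_free eqn_leq rank_leq_row /=.
  have Hsub : (Tm + U <= tlmx A cs')%MS.
    rewrite addsmx_sub; apply/andP; split.
      apply: tlmx_sub => c Hc; rewrite tlL //.
      by have := tl_sub A (cs1P c Hc).
    apply/row_subP => i; have := tl_sub A (usP i); by rewrite /= expr0 mulmx1.
  apply: leq_trans _ (mxrankS Hsub).
  rewrite size_cat size_map size_map size_enum_ord.
  have -> : \rank (Tm + U)%MS = \rank (Tm + (K :\: Tm))%MS.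
    by apply: eqmx_rank; apply/eqmxP; exact: adds_eqmx (eqmx_refl Tm) (eq_row_base _).
  by rewrite mxrank_disjoint_sum ?(eqP Ftl) // capmxC capmx_diff.
exists cs'; split => //.
- by apply/andP; split.
- rewrite all_cat; apply/andP; split; apply/allP => c /mapP[d _ ->] //.
- apply/andP; split.
    rewrite /cs' unzip1_cat unzip1_lift unzip1_ones; apply: sorted_geq_cat.
    + by rewrite sorted_map.
    + by elim: (size _) => // -[|j] //= ->.
    + move=> x y /mapP[z Hz ->]; rewrite mem_nseq => /andP[_ /eqP ->].
      by [].
  rewrite all_cat; apply/andP; split; apply/allP => c /mapP[d Hd ->] /=.
    by rewrite mxexpS mulmxA LA ?c2S' ?(allP Vcs d Hd).
  rewrite expr1; apply/eqP/sub_kermxP.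
  exact: submx_trans (row_sub _ _) (submx_trans UK KA).
Qed.


Lemma jordan (k : fieldType) n (A : 'M[k]_n) m : A ^+ m = 0 ->
  exists a, is_partition a /\ exists (E : 'M[k]_(sumn a, n)) (F : 'M[k]_(n, sumn a)),
    [/\ E *m F = 1%:M, F *m E = 1%:M & Nmat k a *m E = E *m A].
Proof.
move=> Hm.
have [cs [/andP[E1 E2] Fcs _ Pcs /andP[Scs Vcs]]] :=
  @jordan_sub k n A m Hm n n 1%:M (rank_leq_col _) (submx1 _).
exists (unzip1 cs); split.
  by rewrite /is_partition Scs all_map.
have Full : row_full (chmx A cs).
  by rewrite /row_full; apply/eqP; rewrite (eqmx_rank (introT andP (conj E1 E2))) mxrank1.
exists (chmx A cs), (pinvmx (chmx A cs)); split.
- exact: mulmxVp.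
- exact: mulVpmx.
- exact: Nmat_chmx.
Qed.

Lemma inv_dims (k : fieldType) p q (P : 'M[k]_(p, q)) (Q : 'M[k]_(q, p)) :
  P *m Q = 1%:M -> Q *m P = 1%:M -> p = q.
Proof.
move=> H1 H2; apply/eqP; rewrite eqn_leq.
have := mxrankM_maxl P Q; rewrite H1 mxrank1 => h1.
have := mxrankM_maxl Q P; rewrite H2 mxrank1 => h2.
by rewrite (leq_trans h1 (rank_leq_col _)) (leq_trans h2 (rank_leq_col _)).
Qed.

Lemma rank_mulr (k : fieldType) m n q (X : 'M[k]_(m, n)) (P : 'M[k]_(n, q)) Q :
  P *m Q = 1%:M -> \rank (X *m P) = \rank X.
Proof.
move=> H; apply/eqP; rewrite eqn_leq mxrankM_maxl /=.
by have := mxrankM_maxl (X *m P) Q; rewrite -mulmxA H mulmx1.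
Qed.

Lemma rank_mull (k : fieldType) m n q (X : 'M[k]_(m, n)) (P : 'M[k]_(q, m)) Q :
  Q *m P = 1%:M -> \rank (P *m X) = \rank X.
Proof.
move=> H; apply/eqP; rewrite eqn_leq mxrankM_maxr /=.
by have := mxrankM_maxr Q (P *m X); rewrite mulmxA H mul1mx.
Qed.

Lemma intertw_pow (k : fieldType) a b (A : 'M[k]_a) (B : 'M[k]_b) (P : 'M[k]_(a, b)) j :
  A *m P = P *m B -> A ^+ j *m P = P *m B ^+ j.
Proof.
move=> H; elim: j => [|j IH]; first by rewrite !expr0 mul1mx mulmx1.
by rewrite !mxexpS -mulmxA IH mulmxA H -mulmxA.
Qed.

Lemma hom_comp (k : fieldType) (X Y Z : lmod k) a1 a2 b1 b2 :
  is_hom X Y a1 a2 -> is_hom Y Z b1 b2 -> is_hom X Z (a1 *m b1) (a2 *m b2).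
Proof.
case=> h1 h2 h3 [g1 g2 g3]; split.
- by rewrite mulmxA h1 -mulmxA g1 mulmxA.
- by rewrite mulmxA h2 -mulmxA g2 mulmxA.
- by rewrite mulmxA h3 -mulmxA g3 mulmxA.
Qed.

Lemma iso_refl (k : fieldType) (X : lmod k) : iso X X.
Proof.
exists 1%:M, 1%:M, 1%:M, 1%:M; split; rewrite ?mulmx1 //;
  by split; rewrite ?mulmx1 ?mul1mx.
Qed.

Lemma iso_sym (k : fieldType) (X Y : lmod k) : iso X Y -> iso Y X.
Proof. by case=> p1 [p2 [q1 [q2 [H1 H2 [a b] [c d]]]]]; exists q1, q2, p1, p2. Qed.

Lemma iso_trans (k : fieldType) (X Y Z : lmod k) : iso X Y -> iso Y Z -> iso X Z.
Proof.
case=> p1 [p2 [q1 [q2 [H1 H2 [a b] [c d]]]]].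
case=> p1' [p2' [q1' [q2' [H1' H2' [a' b'] [c' d']]]]].
exists (p1 *m p1'), (p2 *m p2'), (q1' *m q1), (q2' *m q2); split.
- exact: hom_comp H1 H1'.
- exact: hom_comp H2' H2.
- split.
    by rewrite mulmxA -(mulmxA p1 p1' q1') a' mulmx1 a.
  by rewrite mulmxA -(mulmxA q1' q1 p1) b mulmx1 b'.
- split.
    by rewrite mulmxA -(mulmxA p2 p2' q2') c' mulmx1 c.
  by rewrite mulmxA -(mulmxA q2' q2 p2) d mulmx1 d'.
Qed.

Lemma diag_mul (k : fieldType) m1 m2 n1 n2 p1 p2 (A : 'M[k]_(m1, n1)) (B : 'M[k]_(m2, n2))
   (C : 'M[k]_(n1, p1)) (D : 'M[k]_(n2, p2)) :
  block_mx A 0 0 B *m block_mx C 0 0 D = block_mx (A *m C) 0 0 (B *m D).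
Proof. by rewrite mulmx_block !mulmx0 !mul0mx !addr0 !add0r. Qed.

Lemma dsum_iso (k : fieldType) (U U' V V' : lmod k) :
  iso U U' -> iso V V' -> iso (dsum U V) (dsum U' V').
Proof.
case=> p1 [p2 [q1 [q2 [[h1 h2 h3] [g1 g2 g3] [a b] [c d]]]]].
case=> p1' [p2' [q1' [q2' [[h1' h2' h3'] [g1' g2' g3'] [a' b'] [c' d']]]]].
exists (block_mx p1 0 0 p1'), (block_mx p2 0 0 p2'), (block_mx q1 0 0 q1'),
  (block_mx q2 0 0 q2'); split; rewrite /=.
- by split; rewrite /= !diag_mul ?h1 ?h1' ?h2 ?h2' ?h3 ?h3'.
- by split; rewrite /= !diag_mul ?g1 ?g1' ?g2 ?g2' ?g3 ?g3'.
- by split; rewrite diag_mul ?a ?a' ?b ?b' -scalar_mx_block.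
- by split; rewrite diag_mul ?c ?c' ?d ?d' -scalar_mx_block.
Qed.

Lemma exact_tr (k : fieldType) a b c a' b' c' (f : 'M[k]_(a, b)) (g : 'M[k]_(b, c))
  (pa : 'M[k]_(a, a')) qa (pb : 'M[k]_(b, b')) qb (pc : 'M[k]_(c, c')) qc :
  pa *m qa = 1%:M -> qa *m pa = 1%:M -> pb *m qb = 1%:M -> qb *m pb = 1%:M ->
  pc *m qc = 1%:M -> qc *m pc = 1%:M ->
  row_free f -> row_full g -> (f == kermx g)%MS ->
  [/\ row_free (qa *m f *m pb), row_full (qb *m g *m pc) &
      (qa *m f *m pb == kermx (qb *m g *m pc))%MS].
Proof.
move=> a1 a2 b1 b2 c1 c2 Ff Fg /andP[K1 K2].
have ea := inv_dims a1 a2; have ec := inv_dims c1 c2.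
split.
- by rewrite /row_free (rank_mulr _ b1) (rank_mull _ a1) -ea.
- by rewrite /row_full (rank_mulr _ c1) (rank_mull _ b1) -ec.
apply/andP; split.
  apply/sub_kermxP; have /sub_kermxP fg0 := K1.
  by rewrite -!mulmxA (mulmxA pb) b1 mul1mx (mulmxA f) fg0 mul0mx mulmx0.
set W := kermx _.
have W0 : W *m qb *m g = 0.
  have := mulmx_ker (qb *m g *m pc); rewrite -/W => H.
  by rewrite -(mulmx1 (W *m qb *m g)) -c1 mulmxA -(mulmxA W qb g) -(mulmxA W) H mul0mx.
have /submxP [D HD] : (W *m qb <= f)%MS.
  by apply: submx_trans K2; apply/sub_kermxP.
have -> : W = D *m pa *m (qa *m f *m pb).
  by rewrite -(mulmx1 W) -b2 mulmxA HD !mulmxA -(mulmxA D pa qa) a1 mulmx1.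
exact: submxMl.
Qed.

Lemma ses_tr (k : fieldType) (U M V U' M' V' : lmod k) :
  ses U M V -> iso U U' -> iso M M' -> iso V V' -> ses U' M' V'.
Proof.
case=> f1 [f2 [g1 [g2 [Hf Hg [Ff1 Ff2] [Fg1 Fg2] [K1 K2]]]]].
case=> pU1 [pU2 [qU1 [qU2 [HpU HqU [u1 u2] [u3 u4]]]]].
case=> pM1 [pM2 [qM1 [qM2 [HpM HqM [m1 m2] [m3 m4]]]]].
case=> pV1 [pV2 [qV1 [qV2 [HpV HqV [v1 v2] [v3 v4]]]]].
have [A1 B1 C1] := exact_tr u1 u2 m1 m2 v1 v2 Ff1 Fg1 K1.
have [A2 B2 C2] := exact_tr u3 u4 m3 m4 v3 v4 Ff2 Fg2 K2.
exists (qU1 *m f1 *m pM1), (qU2 *m f2 *m pM2), (qM1 *m g1 *m pV1), (qM2 *m g2 *m pV2).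
split => //.
- exact: hom_comp (hom_comp HqU Hf) HpM.
- exact: hom_comp (hom_comp HqM Hg) HpV.
Qed.

Definition nilpM (k : fieldType) (X : lmod k) :=
  exists m, T1 X ^+ m = 0 /\ T2 X ^+ m = 0.

Lemma nil_q (k : fieldType) a b (A : 'M[k]_a) (B : 'M[k]_b) P (Q : 'M[k]_(b, a)) m :
  A *m P = P *m B -> Q *m P = 1%:M -> A ^+ m = 0 -> B ^+ m = 0.
Proof.
move=> H1 H2 H3.
by rewrite -(mul1mx (B ^+ m)) -H2 -mulmxA -(@intertw_pow k a b A B P m H1) H3 mul0mx mulmx0.
Qed.

Lemma nil_inj (k : fieldType) a b (A : 'M[k]_a) (B : 'M[k]_b) (P : 'M[k]_(a, b)) m :
  A *m P = P *m B -> row_free P -> B ^+ m = 0 -> A ^+ m = 0.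
Proof.
move=> H1 H2 H3; rewrite -(mulmxKp H2 (A ^+ m)) (@intertw_pow k a b A B P m H1) H3 mulmx0 mul0mx //.
Qed.

Lemma nil_iso (k : fieldType) (X Y : lmod k) : iso X Y -> nilpM X -> nilpM Y.
Proof.
case=> p1 [p2 [q1 [q2 [[h1 h2 h3] _ [a b] [c d]]]]] [m [H1 H2]].
by exists m; split; [apply: nil_q h1 b H1 | apply: nil_q h2 d H2].
Qed.

Lemma nil_ses (k : fieldType) (U M V : lmod k) : ses U M V -> nilpM M -> nilpM U /\ nilpM V.
Proof.
case=> f1 [f2 [g1 [g2 [[h1 h2 h3] [g1' g2' g3'] [Ff1 Ff2] [Fg1 Fg2] _]]]] [m [H1 H2]].
split; exists m; split.
- exact: nil_inj h1 Ff1 H1.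
- exact: nil_inj h2 Ff2 H2.
- exact: nil_q g1' (mulVpmx Fg1) H1.
- exact: nil_q g2' (mulVpmx Fg2) H2.
Qed.

Lemma diag_pow (k : fieldType) m1 m2 (A : 'M[k]_m1) (B : 'M[k]_m2) j :
  (block_mx A 0 0 B) ^+ j = block_mx (A ^+ j) 0 0 (B ^+ j).
Proof.
elim: j => [|j IH]; first by rewrite !expr0 -scalar_mx_block.
by rewrite !mxexpS IH diag_mul.
Qed.

Lemma pow0_add (k : fieldType) a (A : 'M[k]_a) m j : A ^+ m = 0 -> A ^+ (m + j) = 0.
Proof. by move=> H; rewrite exprD H mul0r. Qed.

Lemma nil_dsum (k : fieldType) (U V : lmod k) : nilpM U -> nilpM V -> nilpM (dsum U V).
Proof.
case=> m [H1 H2] [m' [H1' H2']]; exists (m + m')%N; rewrite /= !diag_pow.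
have E1 : T1 U ^+ (m + m') = 0 by exact: pow0_add.
have E2 : T2 U ^+ (m + m') = 0 by exact: pow0_add.
have E3 : T1 V ^+ (m + m') = 0 by rewrite addnC; exact: pow0_add.
have E4 : T2 V ^+ (m + m') = 0 by rewrite addnC; exact: pow0_add.
by rewrite E1 E2 E3 E4 !block_mx0.
Qed.

Lemma Jpow (k : fieldType) l j :
  Jblk k l ^+ j = \matrix_(i < l, i' < l) ((i + j)%N == i')%:R.
Proof.
elim: j => [|j IH].
  by rewrite expr0; apply/matrixP => i i'; rewrite !mxE addn0.
rewrite mxexpSr IH; apply/matrixP => i i'; rewrite !mxE.
case: (ltnP (i + j) l) => Hil.
  rewrite (bigD1 (Ordinal Hil)) //= big1 ?addr0.
    by rewrite !mxE eqxx mul1r addnS.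
  move=> t Ht; rewrite !mxE; case: eqP => E; last by rewrite mul0r.
  by case/eqP: Ht; apply: val_inj; rewrite /= E.
rewrite big1.
  case: eqP => // E; move: (ltn_ord i'); rewrite -E => H; exfalso; lia.
move=> t _; rewrite !mxE; case: eqP => E; last by rewrite mul0r.
by move: (ltn_ord t); rewrite -E ltnNge Hil.
Qed.

Lemma Nmat_nil (k : fieldType) a j : (sumn a <= j)%N -> Nmat k a ^+ j = 0.
Proof.
elim: a => [|x r IH] /= H.
  by apply/matrixP => i; case: i.
rewrite diag_pow IH; last by apply: leq_trans H; rewrite leq_addl.
have -> : Jblk k x ^+ j = 0.
  rewrite Jpow; apply/matrixP => i i'; rewrite !mxE; case: eqP => // E.
  by move: (ltn_ord i'); rewrite -E => H'; exfalso; lia.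
by rewrite block_mx0.
Qed.

Definition kd (k : fieldType) (X : lmod k) := \rank (kermx (hm X)).

Lemma rf_kd (k : fieldType) (X : lmod k) : row_free (hm X) = (kd X == 0%N).
Proof.
rewrite /kd mxrank_ker /row_free; have := rank_leq_row (hm X); lia.
Qed.

Lemma kd_iso (k : fieldType) (X Y : lmod k) : iso X Y -> kd X = kd Y.
Proof.
case=> p1 [p2 [q1 [q2 [[h1 h2 h3] _ [a b] [c d]]]]].
have hY : hm Y = q1 *m hm X *m p2 by rewrite -mulmxA h3 mulmxA b mul1mx.
rewrite /kd !mxrank_ker hY (rank_mulr _ c) (rank_mull _ a); congr (_ - _)%N; exact: inv_dims a b.
Qed.

Lemma kd_dsum (k : fieldType) (U V : lmod k) : kd (dsum U V) = (kd U + kd V)%N.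
Proof.
rewrite /kd !mxrank_ker /= rank_diag_block_mx.
have := rank_leq_row (hm U); have := rank_leq_row (hm V); lia.
Qed.

Lemma kd_ses (k : fieldType) (U M V : lmod k) : ses U M V -> (kd M <= kd U + kd V)%N.
Proof.
case=> f1 [f2 [g1 [g2 [[h1 h2 h3] [g1' g2' g3'] [Ff1 Ff2] _ [/andP[K1 K2] _]]]]].
rewrite /kd; set K := kermx (hm M).
rewrite -(mxrank_mul_ker K g1) addnC; apply: leq_add.
  set W := (K :&: kermx g1)%MS.
  have /submxP [D HD] : (W <= f1)%MS by apply: submx_trans K2; exact: capmxSr.
  have : (W *m hm M = 0).
    by apply/sub_kermxP; apply: submx_trans (capmxSl _ _) _.
  rewrite HD -mulmxA -h3 mulmxA => H.
  have DK : (D <= kermx (hm U))%MS.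
    apply/sub_kermxP; rewrite -(mulmxKp Ff2 (D *m hm U)) H mul0mx //.
  apply: leq_trans (mxrankM_maxl _ _) (mxrankS DK).
apply: mxrankS; apply/sub_kermxP.
by rewrite -mulmxA -g3' mulmxA mulmx_ker mul0mx.
Qed.

Definition goodm (k : fieldType) (X : lmod k) := [/\ is_lmod X, nilpM X & row_free (hm X)].

Lemma normalize (k : fieldType) (X : lmod k) : goodm X -> exists X', inS X' /\ iso X X'.
Proof.
case=> HL [m [H1 H2]] Hf.
have [a [Pa [E1 [F1 [e1 f1 n1]]]]] := jordan H1.
have [b [Pb [E2 [F2 [e2 f2 n2]]]]] := jordan H2.
have t1 : T1 X *m F1 = F1 *m Nmat k a.
  by rewrite -[RHS]mulmx1 -e1 mulmxA -(mulmxA F1 _ E1) n1 mulmxA f1 mul1mx.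
have t2 : T2 X *m F2 = F2 *m Nmat k b.
  by rewrite -[RHS]mulmx1 -e2 mulmxA -(mulmxA F2 _ E2) n2 mulmxA f2 mul1mx.
set f := E1 *m hm X *m F2.
exists (LMod (Nmat k a) (Nmat k b) f); split.
  exists a, b, f; split => //.
    rewrite /is_lmod /= /f !mulmxA n1 -!mulmxA; congr (_ *m _).
    by rewrite mulmxA HL -t2 mulmxA.
  rewrite /row_free /f (rank_mulr _ f2) (rank_mull _ f1) (inv_dims e1 f1).
  exact: Hf.
exists F1, F2, E1, E2; split => //; split => //=.
- by rewrite /f !mulmxA f1 mul1mx.
- by rewrite /f -mulmxA f2 mulmx1.
Qed.


Lemma inS_lmod (k : fieldType) (X : lmod k) : inS X -> is_lmod X.
Proof. by case=> a [b [f [_ _ _ H _]]]. Qed.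

Lemma inSabc_nil (k : fieldType) a b c (X : lmod k) : inSabc a b c X -> nilpM X.
Proof.
case=> f [-> _ _ _]; exists (sumn a + sumn b)%N; split => /=; apply: Nmat_nil.
  exact: leq_addr.
exact: leq_addl.
Qed.

Lemma inSabc_rf (k : fieldType) a b c (X : lmod k) : inSabc a b c X -> row_free (hm X).
Proof. by case=> f [-> _ H _]. Qed.

Unset Implicit Arguments. Set Strict Implicit.
Local Close Scope ring_scope.

Theorem lemma3p1 (k : fieldType) (a b c : seq nat) (Y Z : lmod k) :
  is_partition a -> is_partition b -> is_partition c ->
  inSabc a b c Y -> inSabc a b c Z ->
  (le_ext Y Z <-> ext_chain (@is_lmod k) Y Z).
Proof.
move=> _ _ _ HYs HZs; split.
  case=> s [M [U [V [HM HUV HY HS HZ]]]]; exists s, M, U, V; split => //.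
  - by move=> i Hi; apply: inS_lmod; apply: HM.
  - by move=> i Hi; have [h1 h2] := HUV i Hi; split; apply: inS_lmod.
case=> s [M [U [V [HM HUV HY HS HZ]]]].
have kZ : kd Z = 0%N by apply/eqP; rewrite -rf_kd; exact: inSabc_rf HZs.
have kM' : forall j, (j <= s)%N -> kd (M (s - j)%N) = 0%N.
  elim=> [|j IH] Hj; first by rewrite subn0 (kd_iso HZ).
  have Hi : (s - j.+1 < s)%N by lia.
  have E : (s - j.+1).+1 = (s - j)%N by lia.
  have [Hses Hiso] := HS _ Hi.
  have := kd_ses Hses; rewrite -kd_dsum (kd_iso Hiso) E IH; last by lia.
  by rewrite leqn0 => /eqP.
have kM : forall i, (i <= s)%N -> kd (M i) = 0%N.
  move=> i Hi; have := kM' (s - i)%N (leq_subr _ _); by rewrite subKn.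
have kUV : forall i, (i < s)%N -> kd (U i) = 0%N /\ kd (V i) = 0%N.
  move=> i Hi; have [_ Hiso] := HS _ Hi.
  have := kM i.+1 Hi; rewrite -(kd_iso Hiso) kd_dsum; lia.
have nY : nilpM Y := inSabc_nil HYs.
have nM : forall i, (i <= s)%N -> nilpM (M i).
  elim=> [|i IH] Hi; first exact: nil_iso HY nY.
  have [Hses Hiso] := HS _ Hi.
  have [nU nV] := nil_ses Hses (IH (ltnW Hi)).
  exact: nil_iso Hiso (nil_dsum nU nV).
have nUV : forall i, (i < s)%N -> nilpM (U i) /\ nilpM (V i).
  by move=> i Hi; have [Hses _] := HS _ Hi; apply: nil_ses Hses (nM i (ltnW Hi)).
have gM : forall i, (i <= s)%N -> goodm (M i).
  by move=> i Hi; split; [apply: HM | apply: nM | rewrite rf_kd kM].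
have gU : forall i, (i < s)%N -> goodm (U i).
  move=> i Hi; split; [apply: (HUV i Hi).1 | apply: (nUV i Hi).1 |].
  by rewrite rf_kd (kUV i Hi).1.
have gV : forall i, (i < s)%N -> goodm (V i).
  move=> i Hi; split; [apply: (HUV i Hi).2 | apply: (nUV i Hi).2 |].
  by rewrite rf_kd (kUV i Hi).2.
have pick : forall (P : nat -> bool) (X : nat -> lmod k),
    (forall i, P i -> goodm (X i)) ->
    forall i, exists X', P i -> inS X' /\ iso (X i) X'.
  move=> P X HX i; case: (boolP (P i)) => Hp.
    by have [X' HX'] := normalize (HX i Hp); exists X'.
  by exists (X i).
pose M' i := proj1_sig (constructive_indefinite_description _ (pick _ _ gM i)).
pose U' i := proj1_sig (constructive_indefinite_description _ (pick _ _ gU i)).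
pose V' i := proj1_sig (constructive_indefinite_description _ (pick _ _ gV i)).
have hM : forall i, (i <= s)%N -> inS (M' i) /\ iso (M i) (M' i).
  by move=> i; rewrite /M'; case: constructive_indefinite_description.
have hU : forall i, (i < s)%N -> inS (U' i) /\ iso (U i) (U' i).
  by move=> i; rewrite /U'; case: constructive_indefinite_description.
have hV : forall i, (i < s)%N -> inS (V' i) /\ iso (V i) (V' i).
  by move=> i; rewrite /V'; case: constructive_indefinite_description.
exists s, M', U', V'; split.
- by move=> i Hi; case: (hM i Hi).
- by move=> i Hi; split; [case: (hU i Hi) | case: (hV i Hi)].
- exact: iso_trans HY (hM 0%N (leq0n _)).2.
- move=> i Hi; have [Hses Hiso] := HS _ Hi.
  have iU := (hU i Hi).2; have iV := (hV i Hi).2.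
  split; first exact: ses_tr Hses iU (hM i (ltnW Hi)).2 iV.
  apply: iso_trans (iso_sym (dsum_iso iU iV)) _.
  exact: iso_trans Hiso (hM i.+1 Hi).2.
- exact: iso_trans (iso_sym (hM s (leqnn s)).2) HZ.
Qed.
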